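(* Let $\mathbb X$ be a flow space and $x_\bullet\in\mathbb X$. If $\mathbb X$ is not dense at $x_\bullet$, then $\mathbb X$ does not admit an expansion about $x_\bullet$.
   Context: A flow space is a compact metrizable space $\mathbb X$ of topological dimension one with a continuous action $(t,x)\mapsto t.x$ of $\mathbb R$ without fixed points; orbits are oriented by increasing $t$. $\mathbb X$ is dense at $x\in\mathbb X$ if every neighbourhood of $x$ contains a point of the forward orbit $\{t.y:t>0\}$ of every $y\in\mathbb X$. $W_k$ is a wedge of $k$ circles with a chosen orientation on each circle. A positive map $f\colon W_m\to W_k$ is a continuous surjection sending wedge point to wedge point, preserving the orientation of each circle, and locally injective at every point other than the wedge point. A projection $p\colon\mathbb X\to W_k$ is a continuous surjection which is locally injective along orbits (each $x$ has $\epsilon_x>0$ with $p$ injective on $\{t.x:|t|<\epsilon_x\}$) and orientation preserving along orbits. An expansion of $\mathbb X$ about $x_\bullet$ consists of oriented wedges of circles $X_i$ ($i\ge1$) with wedge points $x_i$, positive maps $f_i\colon X_{i+1}\to X_i$, and projections $p_i\colon\mathbb X\to X_i$ with $p_i(x_\bullet)=x_i$, such that $p_n=f_{n,m}\circ p_m$ for all $m>n$, where $f_{n,m}=f_n\circ f_{n+1}\circ\cdots\circ f_{m-1}\colon X_m\to X_n$, and such that $x\mapsto(p_i(x))_{i\ge1}$ is a homeomorphism from $\mathbb X$ onto the inverse limit $\{(z_i)\in\prod_i X_i : z_i=f_i(z_{i+1})\ \forall i\}$. *)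

(* Defs.v *)
From HB Require Import structures.
From mathcomp Require Import all_boot all_order all_algebra.
From mathcomp Require Import all_classical all_reals all_analysis.
From mathcomp Require Import Rstruct Rstruct_topology.
Set Implicit Arguments. Unset Strict Implicit. Unset Printing Implicit Defensive.
Import Order.TTheory GRing.Theory Num.Theory.
Local Open Scope classical_set_scope.
Local Open Scope ring_scope.

Notation RR := Rdefinitions.R.

Definition covdim_le (T : topologicalType) (n : nat) : Prop :=
  forall (a : nat) (U : 'I_a -> set T),
    (forall i, open (U i)) -> (forall x : T, exists i, U i x) ->
    exists (b : nat) (V : 'I_b -> set T),
      [/\ (forall j, open (V j)),
          (forall x : T, exists j, V j x),
          (forall j, exists i, V j `<=` U i) &
          (forall J : seq 'I_b, uniq J -> size J = n.+2 ->
             ~ exists x : T, forall j, j \in J -> V j x)].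

Definition topdim_one (T : topologicalType) : Prop :=
  covdim_le T 1 /\ ~ covdim_le T 0.

(* T is a pseudometric space (so its topology is metric-induced);
   together with Hausdorffness this is "metrizable". *)
Definition is_flow (T : pseudoMetricType RR) (act : RR -> T -> T) : Prop :=
  [/\ continuous (fun q : RR * T => act q.1 q.2),
      (forall x, act 0 x = x),
      (forall s t x, act s (act t x) = act (s + t) x) &
      (forall x, exists t, act t x <> x)].

Definition flow_space (T : pseudoMetricType RR) (act : RR -> T -> T) : Prop :=
  [/\ compact [set: T], hausdorff_space T, topdim_one T & is_flow act].

Definition dense_at (T : pseudoMetricType RR) (act : RR -> T -> T) (x : T) :=
  forall N : set T, nbhs x N -> forall y : T, exists2 t : RR, 0 < t & N (act t y).

(* The j-th circle (j < k) is the circle of radius j+1 centred at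
   (j+1, 0); all these circles meet exactly at the origin (the wedge
   point).  circ j s parametrises it (1-periodically) and fixes its
   orientation: increasing s is the positive direction. *)
Definition circ (j : nat) (s : RR) : RR * RR :=
  (j.+1%:R * (1 - cos (2 * pi * s)), j.+1%:R * sin (2 * pi * s)).

Definition wpt : RR * RR := (0, 0).

Definition wedge (k : nat) : set (RR * RR) :=
  [set z | exists j, (j < k)%N /\ exists s, z = circ j s].

Definition oriented_at (k : nat) (g : RR -> RR * RR) (t0 : RR) : Prop :=
  exists2 e : RR, 0 < e &
   (exists i, (i < k)%N /\ exists phi : RR -> RR,
      [/\ {within `]t0 - e, t0], continuous phi},
          {in `]t0 - e, t0] &, forall u v, u < v -> phi u < phi v} &
          {in `]t0 - e, t0], forall t, g t = circ i (phi t)}]) /\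
   (exists j, (j < k)%N /\ exists psi : RR -> RR,
      [/\ {within `[t0, t0 + e[, continuous psi},
          {in `[t0, t0 + e[ &, forall u v, u < v -> psi u < psi v} &
          {in `[t0, t0 + e[, forall t, g t = circ j (psi t)}]).

Definition positive_map (m k : nat) (f : RR * RR -> RR * RR) : Prop :=
  [/\ {within wedge m, continuous f},
      f @` wedge m = wedge k,
      f wpt = wpt,
      (forall j, (j < m)%N -> forall s, oriented_at k (f \o circ j) s) &
      (forall w, wedge m w -> w <> wpt ->
         exists2 U : set (RR * RR), nbhs w U &
           {in U `&` wedge m &, injective f})].

Definition projection (T : pseudoMetricType RR) (act : RR -> T -> T)
    (k : nat) (p : T -> RR * RR) : Prop :=
  [/\ continuous p,
      p @` setT = wedge k,
      (forall x, exists2 e : RR, 0 < e &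
         {in [set act t x | t in `]- e, e[], injective p}) &
      (forall x, oriented_at k (fun t => p (act t x)) 0)].

Fixpoint fcomp (f : nat -> RR * RR -> RR * RR) (n d : nat) : RR * RR -> RR * RR :=
  match d with
  | 0 => id
  | d'.+1 => fcomp f n d' \o f (n + d')%N
  end.

Definition inv_limit (k : nat -> nat) (f : nat -> RR * RR -> RR * RR)
  : set {ptws nat -> (RR * RR)%type} :=
  [set z | forall i, wedge (k i) (z i) /\ z i = f i (z i.+1)].

(* An expansion of X about xb (indices start at 0 instead of 1). *)
Definition expansion (T : pseudoMetricType RR) (act : RR -> T -> T) (xb : T)
    (k : nat -> nat) (f : nat -> RR * RR -> RR * RR) (p : nat -> T -> RR * RR)
  : Prop :=
  [/\ (forall i, positive_map (k i.+1) (k i) (f i)),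
      (forall i, projection act (k i) (p i)),
      (forall i, p i xb = wpt),
      (forall n d, p n = fcomp f n d.+1 \o p (n + d.+1)%N) &
      let P := fun x : T => ((fun i => p i x) : {ptws nat -> (RR * RR)%type}) in
      [/\ continuous P, injective P, P @` setT = inv_limit k f &
          exists Q : {ptws nat -> (RR * RR)%type} -> T,
            (forall x, Q (P x) = x) /\ {within inv_limit k f, continuous Q}]].

Definition admits_expansion (T : pseudoMetricType RR) (act : RR -> T -> T) (xb : T)
  : Prop := exists k f p, @expansion T act xb k f p.

(* Main.v *)
Require Import Defs.
From HB Require Import structures.
From mathcomp Require Import all_boot all_order all_algebra.
From mathcomp Require Import all_classical all_reals all_analysis.
From mathcomp Require Import Rstruct Rstruct_topology.
From mathcomp Require Import ring lra.
Set Implicit Arguments. Unset Strict Implicit. Unset Printing Implicit Defensive.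
Import Order.TTheory GRing.Theory Num.Theory.
Local Open Scope classical_set_scope.
Local Open Scope ring_scope.
Definition H (z : RR * RR) : RR := z.2 / z.1.

Lemma circ_sin (i : nat) (s : RR) :
  circ i s = (i.+1%:R * (2 * sin (pi * s) ^+ 2),
              i.+1%:R * (2 * sin (pi * s) * cos (pi * s))).
Proof.
rewrite /circ.
have -> : 2 * pi * s = pi * s + pi * s by ring.
rewrite trigo.cosD trigo.sinD; congr (_, _).
  congr (_ * _); rewrite -[X in X - _](cos2Dsin2 (pi * s)); ring.
ring.
Qed.

Lemma circ_sin0 i s : circ i s <> wpt -> sin (pi * s) != 0.
Proof.
rewrite circ_sin /wpt => h; apply/eqP => e; apply: h; rewrite e; congr (_, _); ring.
Qed.

Lemma H_circ i s : sin (pi * s) != 0 -> H (circ i s) = cos (pi * s) / sin (pi * s).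
Proof.
move=> h; rewrite circ_sin /H /=.
have hi : (i.+1%:R : RR) != 0 by rewrite pnatr_eq0.
field. by rewrite h (_ : 1 + i%:R = i.+1%:R) ?hi // -natr1 addrC.
Qed.

Lemma circ_x0 i s : sin (pi * s) != 0 -> (circ i s).1 != 0.
Proof.
move=> h; rewrite circ_sin /=.
by rewrite !mulf_neq0 // ?pnatr_eq0 // expf_neq0.
Qed.

Lemma H_circ_lt i a b : a < b < a + 1 -> 0 < sin (pi * a) * sin (pi * b) ->
  H (circ i b) < H (circ i a).
Proof.
move=> /andP[ab ba1] hp.
have ha : sin (pi * a) != 0 by apply: contraTneq hp => ->; rewrite mul0r ltxx.
have hb : sin (pi * b) != 0 by apply: contraTneq hp => ->; rewrite mulr0 ltxx.
rewrite -subr_gt0 !H_circ //.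
have -> : cos (pi * a) / sin (pi * a) - cos (pi * b) / sin (pi * b)
   = sin (pi * b - pi * a) / (sin (pi * a) * sin (pi * b)).
  rewrite sinB. field. by rewrite ha hb.
apply: divr_gt0 => //; apply: sin_gt0_pi.
have pi0 : 0 < (pi : RR) by exact: pi_gt0.
apply/andP; split.
  by rewrite -mulrBr mulr_gt0 // subr_gt0.
rewrite -mulrBr -ltr_pdivlMl // mulVf ?gt_eqF //. lra.
Qed.
Definition locdec (F : RR -> RR) (c : RR) :=
  exists2 e : RR, 0 < e & forall s,
    (c - e < s < c -> F c < F s) /\ (c < s < c + e -> F s < F c).

Lemma locdec_dec (F : RR -> RR) (lo : RR) :
  (forall c, lo < c -> locdec F c) -> forall a b, lo < a -> a < b -> F b < F a.
Proof.
move=> hl a b la ab.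
pose S := [set c | a <= c <= b /\ forall s, a < s <= c -> F s < F a].
have Sa : S a.
  split; first by rewrite lexx ltW.
  by move=> s /andP[h1 h2]; exfalso; lra.
have hS : has_sup S.
  split; first by exists a.
  by exists b => c [/andP[_ ?] _].
pose m := sup S.
have ub : forall c, S c -> c <= m by move=> c; apply: sup_upper_bound.
have am : a <= m by exact: ub.
have mb : m <= b by apply: sup_le_ub; [exists a | move=> c [/andP[_ ?] _]].
have key1 : forall s, a < s < m -> F s < F a.
  move=> s /andP[h1 h2].
  have [c [_ Sc] hc] := sup_adherent (eps := m - s) (ltac:(lra)) hS.
  apply: Sc; apply/andP; split => //; rewrite -/m in hc; lra.
have key2 : a < m.
  have [e e0 he] := hl a la.
  pose d := Num.min e (b - a).
  have d1 : d <= e by rewrite /d ge_min lexx.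
  have d2 : d <= b - a by rewrite /d ge_min lexx orbT.
  have d0 : 0 < d by rewrite /d lt_min e0 subr_gt0 ab.
  have : S (a + d / 2).
    split; first by apply/andP; split; lra.
    move=> s /andP[h1 h2]; apply: (proj2 (he s)); apply/andP; split; lra.
  move=> /ub; lra.
have key3 : F m < F a.
  have [e e0 he] := hl m (ltac:(lra)).
  pose d := Num.min e (m - a).
  have d1 : d <= e by rewrite /d ge_min lexx.
  have d2 : d <= m - a by rewrite /d ge_min lexx orbT.
  have d0 : 0 < d by rewrite /d lt_min e0 subr_gt0 key2.
  apply: (lt_trans (proj1 (he (m - d / 2)) _)); first by apply/andP; split; lra.
  apply: key1; apply/andP; split; lra.
have mb' : m = b.
  apply/eqP; rewrite eq_le mb /=; rewrite leNgt; apply/negP => mb2.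
  have [e e0 he] := hl m (ltac:(lra)).
  pose d := Num.min e (b - m).
  have d1 : d <= e by rewrite /d ge_min lexx.
  have d2 : d <= b - m by rewrite /d ge_min lexx orbT.
  have d0 : 0 < d by rewrite /d lt_min e0 subr_gt0 mb2.
  have : S (m + d / 2).
    split; first by apply/andP; split; lra.
    move=> s /andP[h1 h2].
    have [sm|ms|->] := ltgtP s m.
    - by apply: key1; apply/andP; split.
    - apply: lt_trans key3; apply: (proj2 (he s)); apply/andP; split; lra.
    - exact: key3.
  move=> /ub; lra.
by rewrite -mb'.
Qed.
Lemma near_phi (A : set RR) (phi : RR -> RR) (t0 : RR) :
  A t0 -> {within A, continuous phi} -> sin (pi * phi t0) != 0 ->
  exists2 eta : RR, 0 < eta & forall t, A t -> `|t0 - t| < eta ->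
    (phi t0 - 1 < phi t < phi t0 + 1) /\ 0 < sin (pi * phi t0) * sin (pi * phi t).
Proof.
move=> At0 hc hs.
have c1 : phi @ within A (nbhs t0) --> phi t0 := (subspace_continuousP A phi).1 hc t0 At0.
have c2 : (fun t => sin (pi * phi t0) * sin (pi * phi t)) @ within A (nbhs t0)
    --> sin (pi * phi t0) * sin (pi * phi t0).
  apply: cvgMr.
  have h1 : (fun t => pi * phi t) @ within A (nbhs t0) --> pi * phi t0 by apply: cvgMr.
  have h2 := continuous_cvg _ (@continuous_sin _ (pi * phi t0)) h1.
  exact: h2.
have n1 := cvgr_gt _ c1 (phi t0 - 1) (ltac:(lra)).
have n2 := cvgr_lt _ c1 (phi t0 + 1) (ltac:(lra)).
have n3 := cvgr_gt _ c2 0 (ltac:(by rewrite -expr2 exprn_even_gt0 //)).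
have : \forall t \near within A (nbhs t0),
   (phi t0 - 1 < phi t < phi t0 + 1) /\ 0 < sin (pi * phi t0) * sin (pi * phi t).
  near=> t; split; [apply/andP; split|].
  - by near: t; exact: n1.
  - by near: t; exact: n2.
  - by near: t; exact: n3.
rewrite /within /= => /nbhs_ballP [eta eta0 heta].
exists eta => // t At ht; apply: heta => //.


Unshelve. all: by end_near. Qed.

Lemma oriented_locdec k g t0 : oriented_at k g t0 -> g t0 <> wpt -> locdec (H \o g) t0.
Proof.
case=> e e0 [[i [_ [phi [cphi mphi ephi]]]] [j [_ [psi [cpsi mpsi epsi]]]]] hg.
have t0A1 : t0 \in `]t0 - e, t0] by rewrite in_itv /= lexx andbT; lra.
have t0A2 : t0 \in `[t0, t0 + e[ by rewrite in_itv /= lexx /=; lra.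
have s1 : sin (pi * phi t0) != 0 by apply: (@circ_sin0 i); rewrite -ephi.
have s2 : sin (pi * psi t0) != 0 by apply: (@circ_sin0 j); rewrite -epsi.
have [eta1 eta10 h1] := near_phi t0A1 cphi s1.
have [eta2 eta20 h2] := near_phi t0A2 cpsi s2.
pose d := Num.min e (Num.min eta1 eta2).
have d1 : d <= e by rewrite /d ge_min lexx.
have d2 : d <= eta1 by rewrite /d !ge_min lexx orbT.
have d3 : d <= eta2 by rewrite /d !ge_min lexx !orbT.
have d0 : 0 < d by rewrite /d !lt_min e0 eta10 eta20.
exists d => // s; split => /andP[hs1 hs2] /=.
- have sA : s \in `]t0 - e, t0] by rewrite in_itv /=; apply/andP; split; lra.
  have [/andP[p1 p2] p3] := h1 s sA (ltac:(rewrite ger0_norm; lra)).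
  have lt1 := mphi s t0 sA t0A1 hs2.
  rewrite ephi // ephi //; apply: H_circ_lt; first by apply/andP; split; lra.
  by rewrite mulrC.
- have sA : s \in `[t0, t0 + e[ by rewrite in_itv /=; apply/andP; split; lra.
  have [/andP[p1 p2] p3] := h2 s sA (ltac:(rewrite ltr0_norm; lra)).
  have lt1 := mpsi t0 s t0A2 sA hs1.
  rewrite epsi // epsi //; apply: H_circ_lt; first by apply/andP; split; lra.
  done.
Qed.

Lemma H_cvg {U : Type} (G : set_system U) {FG : Filter G} (f : U -> RR * RR) (q : RR * RR) :
  q.1 != 0 -> f @ G --> q -> (fun x => H (f x)) @ G --> H q.
Proof.
move=> q1 hf.
have h1 : (fun x => (f x).1) @ G --> q.1 by apply: cvg_comp hf _; exact: cvg_fst.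
have h2 : (fun x => (f x).2) @ G --> q.2 by apply: cvg_comp hf _; exact: cvg_snd.
exact: (cvgM h2 (cvgV q1 h1)).
Qed.

Lemma locdec_shift (F : RR -> RR) c : locdec (fun s => F (s + c)) 0 -> locdec F c.
Proof.
case=> e e0 he; exists e => // s; have [h1 h2] := he (s - c).
rewrite !subrK !add0r in h1 h2; split => /andP[hs1 hs2].
  by apply: h1; apply/andP; split; lra.
by apply: h2; apply/andP; split; lra.
Qed.

Lemma circ_wpt_sin j a : circ j a = wpt -> sin (pi * a) = 0.
Proof.
move=> h; apply/eqP; apply: contraT => hs.
by have := circ_x0 j hs; rewrite h /wpt /= eqxx.
Qed.

Lemma sin_next (a b : RR) : sin (pi * a) = 0 -> a < b < a + 1 -> sin (pi * b) != 0.
Proof.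
move=> ha /andP[h1 h2]; apply/eqP => hb.
have pi0 : 0 < (pi : RR) by exact: pi_gt0.
have : 0 < sin (pi * b - pi * a).
  apply: sin_gt0_pi; apply/andP; split; first by rewrite -mulrBr mulr_gt0 // subr_gt0.
  rewrite -mulrBr -ltr_pdivlMl // mulVf ?gt_eqF //. lra.
by rewrite sinB ha hb !mul0r mulr0 subr0 ltxx.
Qed.

Lemma wedge_x k q : wedge k q -> q <> wpt -> q.1 != 0.
Proof.
case=> j [_ [s ->]] hq; apply: circ_x0; apply: circ_sin0 hq.
Qed.

Lemma oriented_nonwpt k g t0 : oriented_at k g t0 -> g t0 <> wpt ->
  exists2 e : RR, 0 < e & forall s, t0 <= s < t0 + e -> g s <> wpt.
Proof.
case=> e e0 [_ [j [_ [psi [cpsi mpsi epsi]]]]] hg.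
have t0A2 : t0 \in `[t0, t0 + e[ by rewrite in_itv /= lexx /=; lra.
have s2 : sin (pi * psi t0) != 0 by apply: (@circ_sin0 j); rewrite -epsi.
have [eta2 eta20 h2] := near_phi t0A2 cpsi s2.
exists (Num.min e eta2); first by rewrite lt_min e0 eta20.
move=> s /andP[hs1 hs4].
have m1 : Num.min e eta2 <= e by rewrite ge_min lexx.
have m2 : Num.min e eta2 <= eta2 by rewrite ge_min lexx orbT.
have sA : s \in `[t0, t0 + e[ by rewrite in_itv /=; apply/andP; split; lra.
have [_ p3] := h2 s sA (ltac:(rewrite distrC ger0_norm; lra)).
by rewrite epsi // => /circ_wpt_sin hz; move: p3; rewrite hz mulr0 ltxx.
Qed.

Lemma near_bound (A : set RR) (phi : RR -> RR) (t0 : RR) :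
  A t0 -> {within A, continuous phi} ->
  exists2 eta : RR, 0 < eta & forall t, A t -> `|t0 - t| < eta -> phi t < phi t0 + 1.
Proof.
move=> At0 hc.
have c1 : phi @ within A (nbhs t0) --> phi t0 := (subspace_continuousP A phi).1 hc t0 At0.
have n2 := cvgr_lt _ c1 (phi t0 + 1) (ltac:(lra)).
move: n2; rewrite /within /= => /nbhs_ballP [eta eta0 heta].
by exists eta => // t At ht; apply: heta.
Qed.

Lemma act_cvg (T : pseudoMetricType RR) (act : RR -> T -> T) (s : RR) (z : T) :
  continuous (fun q : RR * T => act q.1 q.2) -> (fun x => act s x) @ nbhs z --> act s z.
Proof.
move=> ca.
have h : (fun x : T => (s, x)) @ nbhs z --> (s, z) by exact: (cvg_pair (cvg_cst _) cvg_id).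
exact: (cvg_comp _ _ h (ca (s, z))).
Qed.

Lemma core (T : pseudoMetricType RR) (act : RR -> T -> T) (k : nat) (p : T -> RR * RR) :
  compact [set: T] -> is_flow act -> projection act k p ->
  forall y, exists2 t : RR, 0 < t & p (act t y) = wpt.
Proof.
move=> cT [cact act0 actD _] [cp imp inj ori] y.
case: (pselect (exists2 t : RR, 0 < t & p (act t y) = wpt)) => // hno; exfalso.
have nw : forall t, 0 < t -> p (act t y) <> wpt by move=> t t0 e; apply: hno; exists t.
pose F t := H (p (act t y)).
have hdec : forall a b, 0 < a -> a < b -> F b < F a.
  apply: (@locdec_dec _ 0) => c c0.
  apply: locdec_shift.
  have hg0 : p (act 0 (act c y)) <> wpt by rewrite act0; exact: nw.
  have := oriented_locdec (ori (act c y)) hg0.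
  have -> : (H \o (fun t => p (act t (act c y)))) = (fun s => F (s + c)).
    by apply: funext => t /=; rewrite /F actD.
  by [].
have inw : forall x, wedge k (p x) by move=> x; rewrite -imp; exists x.
have [z [_ cz]] : [set: T] `&` cluster ((fun n : nat => act n%:R y) @ \oo) !=set0.
  by apply: cT; exact: filterT.
have [s0 [s00 s01 ps0]] : exists s0 : RR, [/\ 0 <= s0, s0 < 1/2 & p (act s0 z) <> wpt].
  case: (pselect (p z = wpt)) => pz; last by exists 0; rewrite act0; split => //; lra.
  case: (ori z) => e e0 [_ [j [_ [psi [cpsi mpsi epsi]]]]].
  have t0A2 : 0 \in `[0, 0 + e[ by rewrite in_itv /= lexx /=; lra.
  have [eta eta0 heta] := near_bound t0A2 cpsi.
  pose d := Num.min e (Num.min eta (1/4)).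
  have d1 : d <= e by rewrite /d ge_min lexx.
  have d2 : d <= eta by rewrite /d !ge_min lexx orbT.
  have d3 : d <= 1/4 by rewrite /d !ge_min lexx !orbT.
  have d0 : 0 < d by rewrite /d !lt_min e0 eta0; apply/andP; split => //; lra.
  exists (d / 2); split; [lra | lra |].
  have sA : d / 2 \in `[0, 0 + e[ by rewrite in_itv /=; apply/andP; split; lra.
  have h1 := heta _ sA (ltac:(rewrite add0r normrN ger0_norm; lra)).
  have h2 := mpsi 0 (d / 2) t0A2 sA (ltac:(lra)).
  have hz : sin (pi * psi 0) = 0.
    by apply: (@circ_wpt_sin j); rewrite -(epsi 0 t0A2) act0.
  have hs := @sin_next (psi 0) (psi (d / 2)) hz (ltac:(by rewrite h2 h1)).
  have hx := circ_x0 j hs.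
  rewrite (epsi _ sA) => hw; move: hx; rewrite hw /wpt /= eqxx.
  done.
pose w := act s0 z.
have pw : p (act 0 w) <> wpt by rewrite act0.
have [e2 e20 he2] := oriented_locdec (ori w) pw.
have [e3 e30 he3] := oriented_nonwpt (ori w) pw.
pose d := Num.min e2 (Num.min e3 (1/4)).
have d1 : d <= e2 by rewrite /d ge_min lexx.
have d2 : d <= e3 by rewrite /d !ge_min lexx orbT.
have d3 : d <= 1/4 by rewrite /d !ge_min lexx !orbT.
have d0 : 0 < d by rewrite /d !lt_min e20 e30; apply/andP; split => //; lra.
pose s2 := d / 2 + s0.
have hv : H (p (act s2 z)) < H (p (act s0 z)).
  have := (he2 (d / 2)).2 (ltac:(apply/andP; split; lra)).
  by rewrite /= act0 actD.
have pv : p (act s2 z) <> wpt.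
  have := he3 (d / 2) (ltac:(apply/andP; split; lra)).
  by rewrite actD.
pose L1 := H (p (act s0 z)).
pose L2 := H (p (act s2 z)).
pose del := (L1 - L2) / 3.
have K1 : (fun x => H (p (act s0 x))) @ nbhs z --> L1.
  apply: H_cvg; first exact: wedge_x.
  exact: (cvg_comp _ _ (@act_cvg _ _ s0 z cact) (cp _)).
have K2 : (fun x => H (p (act s2 x))) @ nbhs z --> L2.
  apply: H_cvg; first exact: wedge_x.
  exact: (cvg_comp _ _ (@act_cvg _ _ s2 z cact) (cp _)).
have B1 := cvgr_gt _ K1 (L1 - del) (ltac:(rewrite /del /L1 /L2; lra)).
have B2 := cvgr_lt _ K2 (L2 + del) (ltac:(rewrite /del /L1 /L2; lra)).
have B : nbhs z [set x | L1 - del < H (p (act s0 x)) /\ H (p (act s2 x)) < L2 + del].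
  by apply: filterS2 B1 B2 => x h1 h2.
have getn : forall N : nat, exists n : nat, (N <= n)%N /\ L1 - del < H (p (act s0 (act n%:R y))) /\ H (p (act s2 (act n%:R y))) < L2 + del.
  move=> N.
  have hA : ((fun n : nat => act n%:R y) @ \oo)
      [set x | exists n : nat, (N <= n)%N /\ x = act n%:R y].
    by apply: filterS (nbhs_infty_ge N) => n hn; exists n.
  have [x [[n [hn ->]] hx]] := cz _ _ hA B.
  by exists n.
have [n [n1 [_ hn]]] := getn 1%N.
have [n' [n2 [hn' _]]] := getn n.+1.
rewrite !actD in hn hn'.
have hn1 : (1 : RR) <= n%:R by rewrite ler1n.
have hn2 : (n%:R : RR) + 1 <= n'%:R by rewrite natr1 ler_nat.
have := hdec (s2 + n%:R) (s0 + n'%:R) (ltac:(rewrite /s2; lra)) (ltac:(rewrite /s2; lra)).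
rewrite /F; rewrite -/L1 -/L2 in hv; rewrite /del in hn hn'; lra.
Qed.

Lemma fcomp_wpt (f : nat -> RR * RR -> RR * RR) i d :
  (forall j, f j wpt = wpt) -> fcomp f i d wpt = wpt.
Proof. by move=> hf; elim: d => //= d IH; rewrite hf. Qed.

Unset Implicit Arguments.
Local Close Scope ring_scope.
Local Close Scope classical_set_scope.
Theorem proposition3p2 (T : pseudoMetricType RR) (act : RR -> T -> T) (xb : T) :
  flow_space act -> ~ dense_at act xb -> ~ admits_expansion act xb.
Proof.
Local Open Scope ring_scope.
Local Open Scope classical_set_scope.
move=> [cT _ _ fl] nd [k [f [p [hf hp hpx hcomp hlast]]]].
move: hlast => /= [cP injP imP [Q [QP cQ]]].
set P := (fun x : T => _) in cP injP imP QP cQ.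
have fw : forall j, f j wpt = wpt by move=> j; case: (hf j).
have fix_ : forall n i x, (i <= n)%N -> p n x = wpt -> p i x = wpt.
  move=> n i x; rewrite leq_eqVlt => /orP[/eqP -> //|lt_in] hx.
  have := hcomp i (n - i.+1)%N.
  have -> : (i + (n - i.+1).+1)%N = n by rewrite subnSK // subnKC // ltnW.
  by move=> /(congr1 (fun g => g x)) /= ->; rewrite hx fw fcomp_wpt.
apply: nd => N hN y.
have [n0 hn0] : exists n0, forall x, p n0 x = wpt -> N x.
  apply: contrapT => hno.
  have hx : forall n, exists x, p n x = wpt /\ ~ N x.
    move=> n; apply: contrapT => hn; apply: hno; exists n => x hx.
    by apply: contrapT => hNx; apply: hn; exists x.
  have [xs hxs] := choice hx.
  have cvP : (fun n => (P (xs n) : {ptws nat -> (RR * RR)%type})) @ \oo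
      --> (P xb : {ptws nat -> (RR * RR)%type}).
    apply/pointwise_cvgP => i A hA /=.
    apply: filterS (nbhs_infty_ge i) => n hn /=.
    rewrite /P (fix_ n i _ hn (hxs n).1).
    by rewrite -(hpx i); apply: nbhs_singleton.
  have inlP : inv_limit k f (P xb) by rewrite -imP; exists xb.
  have cQ' := (subspace_continuousP _ Q).1 cQ (P xb) inlP.
  have cv2 : (fun n => Q (P (xs n))) @ \oo --> Q (P xb).
    apply: cvg_comp _ _ _ cQ' => B hB.
    have inP : forall n, inv_limit k f (P (xs n)) by move=> n; rewrite -imP; exists (xs n).
    have h2 : \forall n \near \oo, inv_limit k f (P (xs n)) -> B (P (xs n)) := cvP _ hB.
    exact: (filterS (fun n h => h (inP n)) h2).
  have hN' : nbhs (Q (P xb)) N by rewrite /P QP.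
  have h3 : \forall n \near \oo, N (Q (P (xs n))) := cv2 _ hN'.
  have hxN : \forall n \near \oo, N (xs n) by apply: filterS h3 => n; rewrite /P QP.
  have [n hn] := filter_ex hxN.
  by case: (hxs n).
have [t t0 ht] := core cT fl (hp n0) y.
by exists t => //; apply: hn0.
Qed.
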